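(* Let $X$ be a real vector space and let $A\subseteq X$ be convex and relatively solid. Then (1) $cor(A^c)=int_c(A^c)$, where $A^c=X\setminus A$; (2) $\delta A=vcl(A)\setminus cor(A)$, where $\delta A$ is the algebraic boundary of $A$.
   Context: For $C\subseteq X$: $cor(C):=\{x\in C:\ \forall x'\in X\ \exists \lambda'>0 \text{ with } x+\lambda x'\in C\ \forall\lambda\in[0,\lambda']\}$; $icr(C):=\{x\in C:\ \forall x'\in span(C-C)\ \exists \lambda'>0 \text{ with } x+\lambda x'\in C\ \forall\lambda\in[0,\lambda']\}$, and $C$ is relatively solid if $icr(C)\neq\emptyset$; $vcl(C):=\{b\in X:\ \exists x\in X \text{ such that } \forall\lambda'>0\ \exists\lambda\in[0,\lambda'] \text{ with } b+\lambda x\in C\}$. The algebraic boundary $\delta C$ is the set of points of $X$ belonging neither to $cor(C)$ nor to $cor(X\setminus C)$. The core convex topology $\tau_c$ is the topology on $X$ whose open sets are the unions of families of convex sets $B$ with $cor(B)=B$; $int_c$ denotes interior in $\tau_c$. *)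

(* Defs.v *)
From HB Require Import structures.
From mathcomp Require Import all_boot all_order all_algebra.
From mathcomp Require Import boolp classical_sets reals.
Set Implicit Arguments. Unset Strict Implicit. Unset Printing Implicit Defensive.
Import Order.TTheory GRing.Theory Num.Theory.
Local Open Scope classical_set_scope.
Local Open Scope ring_scope.

Section AlgebraicNotions.
Variables (R : realType) (X : lmodType R).

Definition convex_set (C : set X) : Prop :=
  forall x y t, C x -> C y -> 0 <= t -> t <= 1 -> C (t *: x + (1 - t) *: y).

Definition cor (C : set X) : set X :=
  [set x | C x /\ forall x' : X, exists2 l' : R, 0 < l' &
     forall l : R, 0 <= l -> l <= l' -> C (x + l *: x')].

Definition span_set (S : set X) : set X :=
  [set v | exists n (a : 'I_n -> R) (s : 'I_n -> X),
     (forall i, S (s i)) /\ v = \sum_(i < n) a i *: s i].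

Definition diff_set (C : set X) : set X :=
  [set v | exists x y, C x /\ C y /\ v = x - y].

Definition icr (C : set X) : set X :=
  [set x | C x /\ forall x' : X, span_set (diff_set C) x' ->
     exists2 l' : R, 0 < l' &
     forall l : R, 0 <= l -> l <= l' -> C (x + l *: x')].

Definition relatively_solid (C : set X) : Prop := icr C !=set0.

Definition vcl (C : set X) : set X :=
  [set b | exists x : X, forall l' : R, 0 < l' ->
     exists l : R, [/\ 0 <= l, l <= l' & C (b + l *: x)]].

Definition alg_boundary (C : set X) : set X :=
  [set x | ~ cor C x /\ ~ cor (~` C) x].

Definition core_convex_open (U : set X) : Prop :=
  exists F : set (set X),
    (forall B, F B -> convex_set B /\ cor B = B) /\ U = \bigcup_(B in F) B.

Definition int_c (S : set X) : set X :=
  [set x | exists U, [/\ core_convex_open U, U `<=` S & U x]].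

End AlgebraicNotions.

(* Main.v *)
Require Import Defs.
From HB Require Import structures.
From mathcomp Require Import all_boot all_order all_algebra.
From mathcomp Require Import boolp classical_sets reals.
From mathcomp Require Import ring lra.
Set Implicit Arguments. Unset Strict Implicit. Unset Printing Implicit Defensive.
Import Order.TTheory GRing.Theory Num.Theory.
Local Open Scope classical_set_scope.
Local Open Scope ring_scope.
Section Helpers.
Variables (R : realType) (X : lmodType R).

Definition subsp (V : set X) := V 0 /\ (forall u w, V u -> V w -> V (u + w)) /\
  (forall (c : R) u, V u -> V (c *: u)).

Lemma span1 (S : set X) v : S v -> span_set S v.
Proof.
move=> Sv; exists 1%N, (fun=> 1), (fun=> v); split=> //.
by rewrite big_ord1 scale1r.
Qed.

Lemma span_subsp (S : set X) : subsp (span_set S).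
Proof.
split; [|split].
- exists 0%N, (fun=> 0), (fun=> 0); split; first by case.
  by rewrite big_ord0.
- move=> u w [n [a [s [Ss ->]]]] [m [b [t [St ->]]]].
  exists (n + m)%N, (fun i => match split i with inl j => a j | inr k => b k end),
    (fun i => match split i with inl j => s j | inr k => t k end); split.
    by move=> i; case: (split i).
  rewrite big_split_ord /=; congr (_ + _); apply: eq_bigr => i _.
    by have -> : split (lshift m i) = inl i by exact: (unsplitK (inl i : 'I_n + 'I_m)).
  by have -> : split (rshift n i) = inr i by exact: (unsplitK (inr i : 'I_n + 'I_m)).
- move=> c u [n [a [s [Ss ->]]]]; exists n, (fun i => c * a i), s; split=> //.
  by rewrite scaler_sumr; apply: eq_bigr => i _; rewrite scalerA.
Qed.

Lemma subspN V u : subsp V -> V u -> V (- u).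
Proof. by move=> [_ [_ VZ]] Vu; rewrite -scaleN1r; apply: VZ. Qed.

Lemma subspB V u w : subsp V -> V u -> V w -> V (u - w).
Proof. by move=> sV Vu Vw; case: (sV) => _ [VD _]; apply: VD => //; apply: subspN. Qed.

Lemma complement (V : set X) : subsp V -> exists M, subsp M /\
  (forall z, M z -> V z -> z = 0) /\ (forall z, exists v m, [/\ V v, M m & z = v + m]).
Proof.
move=> sV; case: (sV) => V0 [VD VZ].
pose P (M : set X) := [/\ (forall u w, M u -> M w -> M (u + w)),
  (forall (c : R) u, M u -> M (c *: u)) & (forall z, M z -> V z -> z = 0)].
have [|M [[MD MZ MV] Mmax]] := @Zorn_bigcup X P.
  move=> F FP Ftot; split.
  - move=> u w [M1 FM1 M1u] [M2 FM2 M2w].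
    have [/(_ u M1u) M2u|/(_ w M2w) M1w] := Ftot _ _ FM1 FM2.
      by exists M2 => //; case: (FP _ FM2) => D _ _; apply: D.
    by exists M1 => //; case: (FP _ FM1) => D _ _; apply: D.
  - move=> c u [M1 FM1 M1u]; exists M1 => //.
    by case: (FP _ FM1) => _ Z _; apply: Z.
  - by move=> z [M1 FM1 M1z]; case: (FP _ FM1) => _ _ I; apply: I.
have M0 : M 0.
  apply: contrapT => nM0.
  apply: (Mmax [set 0]).
    split.
      by move=> u Mu; exfalso; apply: nM0; rewrite -(scale0r u); apply: MZ.
    by move=> /(_ 0 erefl).
  by split; [move=> u w -> ->; rewrite addr0|move=> c u ->; rewrite scaler0|].
exists M; split; first by split.
split => // z; apply: contrapT => /forallNP nz.
have nz' : forall v m, V v -> M m -> z <> v + m.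
  by move=> v m Vv Mm E; apply: (nz v); exists m.
pose M' := [set w | exists m (c : R), M m /\ w = m + c *: z].
apply: (Mmax M').
  split.
    by move=> u Mu; exists u, 0; rewrite scale0r addr0.
  move=> H; have Mz : M z by apply: H; exists 0, 1; rewrite add0r scale1r.
  by apply: (nz' 0 z V0 Mz); rewrite add0r.
split.
- move=> u w [m1 [c1 [Mm1 ->]]] [m2 [c2 [Mm2 ->]]].
  exists (m1 + m2), (c1 + c2); split; first by apply: MD.
  by rewrite scalerDl addrACA.
- move=> c u [m1 [c1 [Mm1 ->]]]; exists (c *: m1), (c * c1); split; first by apply: MZ.
  by rewrite scalerDr scalerA.
- move=> w [m [c [Mm ->]]] Vw.
  have [c0|cn0] := eqVneq c 0.
    by move: Vw; rewrite c0 scale0r addr0 => Vm; exact: MV.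
  exfalso; apply: (nz' (c^-1 *: (m + c *: z)) (- c^-1 *: m)).
  - by apply: VZ.
  - by apply: MZ.
  by rewrite scalerDr scalerA mulVf // scale1r scaleNr addrC addKr.
Qed.

End Helpers.

Section Helpers2.
Variables (R : realType) (X : lmodType R).

Lemma icr_comb (A : set X) q p (lam : R) : convex_set A -> icr A q -> A p ->
  0 < lam -> lam <= 1 -> icr A (lam *: q + (1 - lam) *: p).
Proof.
move=> cA [Aq Hq] Ap l0 l1; split; first by apply: cA => //; apply: ltW.
move=> w /Hq [mu mu0 Hmu]; exists (lam * mu); first exact: mulr_gt0.
move=> l l0' l1'.
have -> : lam *: q + (1 - lam) *: p + l *: w =
   lam *: (q + (lam^-1 * l) *: w) + (1 - lam) *: p.
  rewrite scalerDr scalerA mulrA mulfV ?mul1r; last by rewrite gt_eqF.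
  by rewrite addrAC.
apply: cA => //; last exact: ltW.
apply: Hmu; first by rewrite mulr_ge0 // invr_ge0 ltW.
by rewrite ler_pdivrMl.
Qed.

Lemma icr_open (A : set X) q v : convex_set A -> icr A q ->
  span_set (diff_set A) v ->
  exists2 l', 0 < l' & forall l, 0 <= l -> l <= l' -> icr A (q + l *: v).
Proof.
move=> cA iq Lv; have [Aq Hq] := iq.
have [mu mu0 Hmu] := Hq v Lv.
exists (2^-1 * mu); first by rewrite mulr_gt0 // invr_gt0.
move=> l l0 l1.
have -> : q + l *: v = 2^-1 *: q + (1 - 2^-1) *: (q + (2 * l) *: v).
  rewrite scalerDr addrA -scalerDl scalerA -{1}(scale1r q).
  by congr (_ *: _ + _ *: _); field.
apply: icr_comb => //.
- apply: Hmu; first by rewrite mulr_ge0.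
  move: l1; rewrite ler_pdivlMl //; lra.
- by rewrite invr_gt0.
- rewrite invf_le1 //; lra.
Qed.

Lemma icr_convex (A : set X) : convex_set A -> convex_set (icr A).
Proof.
move=> cA q1 q2 t iq1 iq2 t0 t1.
have [->|tn0] := eqVneq t 0.
  by rewrite scale0r add0r subr0 scale1r.
apply: (icr_comb cA iq1 _ _ t1); first by case: iq2.
by rewrite lt_def tn0.
Qed.

Lemma lift_open (V M U : set X) (a0 : X) : subsp V -> subsp M ->
  (forall z, M z -> V z -> z = 0) ->
  (forall z, exists v m, [/\ V v, M m & z = v + m]) ->
  U `<=` V -> convex_set U ->
  (forall u v, U u -> V v -> exists2 l', 0 < l' &
      forall l, 0 <= l -> l <= l' -> U (u + l *: v)) ->
  let B := [set z | exists u m, [/\ U u, M m & z = a0 + u + m]] in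
  [/\ convex_set B, cor B = B & forall z, V (z - a0) -> B z -> U (z - a0)].
Proof.
move=> sV sM MV dec UV cU oU B.
have [_ [MD MZ]] := sM.
split.
- move=> z1 z2 t [u1 [m1 [U1 M1 ->]]] [u2 [m2 [U2 M2 ->]]] t0 t1.
  exists (t *: u1 + (1 - t) *: u2), (t *: m1 + (1 - t) *: m2); split.
  + exact: cU.
  + by apply: MD; apply: MZ.
  rewrite !scalerDr addrACA; congr (_ + _).
  by rewrite addrACA -scalerDl [t + (1 - t)]addrC subrK scale1r.
- apply/seteqP; split=> z; first by case.
  move=> Bz; split => //; case: Bz => u [m [Uu Mm ->]] w.
  have [v [mw [Vv Mw ->]]] := dec w.
  have [l' l'0 Hl] := oU u v Uu Vv.
  exists l' => // l l0 l1.
  exists (u + l *: v), (m + l *: mw); split.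
  + exact: Hl.
  + by apply: MD => //; apply: MZ.
  by rewrite scalerDr addrACA -(addrA a0).
- move=> z Vz [u [m [Uu Mm Ez]]].
  have E : z - a0 = u + m by rewrite Ez -(addrA a0) [_ - a0]addrC addKr.
  rewrite E in Vz *.
  have Vm : V m.
    by have := subspB sV Vz (UV _ Uu); rewrite [u + m]addrC addrK.
  by rewrite (MV _ Mm Vm) addr0.
Qed.

End Helpers2.

Section Helpers3.
Variables (R : realType) (X : lmodType R).

Lemma comb_aff (c : X) (k : R) q1 q2 t :
  t *: (c + k *: q1) + (1 - t) *: (c + k *: q2) = c + k *: (t *: q1 + (1 - t) *: q2).
Proof.
rewrite !scalerDr addrACA -scalerDl [t + (1 - t)]addrC subrK scale1r.
by rewrite !scalerA [t * k]mulrC [(1 - t) * k]mulrC.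
Qed.

Lemma notcor_vcl (A : set X) x : ~ cor (~` A) x <-> vcl A x.
Proof.
split.
- move=> ncx; apply: contrapT => nv; apply: ncx; split.
    move=> Ax; apply: nv; exists 0 => l' l'0; exists 0; split => //.
    by apply: ltW.
    by rewrite scaler0 addr0.
  move=> x'; apply: contrapT => nex; apply: nv; exists x' => l' l'0.
  apply: contrapT => nl; apply: nex; exists l' => // l l0 l1 Al.
  by apply: nl; exists l; split.
- move=> [d Hd] [_ H]; have [l' l'0 Hl] := H d.
  have [l [l0 l1 Al]] := Hd l' l'0; exact: Hl l l0 l1 Al.
Qed.

Lemma single_open (B : set X) : convex_set B -> cor B = B -> core_convex_open B.
Proof.
move=> cB oB; exists [set B]; split; first by move=> B' ->.
by rewrite bigcup_set1.
Qed.

Lemma comb2 (a b c d : X) (t s : R) :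
  t *: (a + b) + s *: (c + d) = (t *: a + s *: c) + (t *: b + s *: d).
Proof. by rewrite !scalerDr addrACA. Qed.

Lemma comb1 (a b c d : X) :
  (a + b) + (c + d) = (a + c) + (b + d).
Proof. by rewrite addrACA. Qed.

End Helpers3.

Section Helpers4.
Variables (R : realType) (X : lmodType R).

Lemma claim_eps (A : set X) a0 x : convex_set A -> ~ vcl A x ->
  exists2 e : R, 0 < e & forall q, icr A q -> ~ A (x + e *: (a0 - q)).
Proof.
move=> cA nvx; apply: contrapT => H; apply: nvx; exists (a0 - x) => l' l'0.
have : ~ (forall q, icr A q -> ~ A (x + l' *: (a0 - q))) by move=> K; apply: H; exists l'.
move=> /existsNP [q /not_implyP [iq /contrapT Aq]].
set t := (1 + l')^-1.
have t0 : 0 < t by rewrite invr_gt0; lra.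
have Et : 1 - t = l' * t by rewrite /t; field; lra.
exists (l' * t); split.
- by rewrite mulr_ge0 // ltW.
- rewrite ger_pMr //= /t invf_le1; lra.
have -> : x + (l' * t) *: (a0 - x) = t *: (x + l' *: (a0 - q)) + (1 - t) *: q.
  rewrite Et !scalerDr !scalerN !scalerA [t * l']mulrC -[RHS]addrA subrK.
  rewrite addrCA [t *: x + _]addrC; congr (_ + _).
  by rewrite -{1}(scale1r x) -scalerBl -Et opprB addrCA subrr addr0.
apply: cA => //; first by case: iq.
- exact: ltW.
- rewrite /t invf_le1; lra.
Qed.

Lemma case_in (A : set X) a0 x : convex_set A -> icr A a0 -> ~ vcl A x ->
  span_set (diff_set A) (x - a0) ->
  exists B, [/\ convex_set B, cor B = B, B x & B `<=` ~` A].
Proof.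
move=> cA ia0 nvx Ly.
set L := span_set (diff_set A).
have sL : subsp L := span_subsp (diff_set A).
have [L0 [LD LZ]] := sL.
have Aa0 : A a0 by case: ia0.
have La : forall a b, A a -> A b -> L (a - b).
  by move=> a b Aa Ab; apply: span1; exists a, b.
have [e e0 He] := claim_eps a0 cA nvx.
set y := x - a0.
pose U := [set u | exists q, icr A q /\ u = (y + e *: a0) + (- e) *: q].
have [M [sM [MV dec]]] := complement sL.
have UV : U `<=` L.
  move=> u [q [iq ->]]; rewrite -addrA scaleNr -scalerBr.
  by apply: LD => //; apply: LZ; apply: La => //; case: iq.
have cU : convex_set U.
  move=> u1 u2 t [q1 [i1 ->]] [q2 [i2 ->]] t0 t1.
  exists (t *: q1 + (1 - t) *: q2); split; last exact: comb_aff.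
  exact: icr_convex.
have oU : forall u v, U u -> L v -> exists2 l', 0 < l' &
      forall l, 0 <= l -> l <= l' -> U (u + l *: v).
  move=> u v [q [iq ->]] Lv.
  have [l' l'0 Hl] := icr_open cA iq (LZ (- e^-1) v Lv).
  exists l' => // l l0 l1; exists (q + l *: (- e^-1 *: v)); split; first exact: Hl.
  rewrite scalerDr -addrA; congr (_ + (_ + _)).
  rewrite !scalerA; congr (_ *: _).
  by field; rewrite gt_eqF.
have [cB oB BU] := lift_open a0 sL sM MV dec UV cU oU.
set B := [set z | exists u m, [/\ U u, M m & z = a0 + u + m]] in cB oB BU.
exists B; split => //.
- exists y, 0; split.
  + exists a0; split => //; by rewrite scaleNr -addrA subrr addr0.
  + by case: sM.
  + by rewrite addr0 /y addrC subrK.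
- move=> a Ba Aa.
  have [q [iq Eq]] := BU a (La _ _ Aa Aa0) Ba.
  apply: (He q iq).
  suff -> : x + e *: (a0 - q) = a0 + (a - a0) by rewrite addrC subrK.
  by rewrite Eq /y scaleNr scalerBr !addrA [a0 + x]addrC addrK.
Qed.

Lemma case_out (A : set X) a0 x : icr A a0 ->
  ~ span_set (diff_set A) (x - a0) ->
  exists B, [/\ convex_set B, cor B = B, B x & B `<=` ~` A].
Proof.
move=> ia0 nLy.
set L := span_set (diff_set A).
have sL : subsp L := span_subsp (diff_set A).
have [L0 [LD LZ]] := sL.
have Aa0 : A a0 by case: ia0.
have La : forall a b, A a -> A b -> L (a - b).
  by move=> a b Aa Ab; apply: span1; exists a, b.
set y := x - a0.
pose V := [set w | exists l (c : R), L l /\ w = l + c *: y].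
have sV : subsp V.
  split; [|split].
  - by exists 0, 0; rewrite scale0r addr0.
  - move=> u w [l1 [c1 [L1 ->]]] [l2 [c2 [L2 ->]]].
    exists (l1 + l2), (c1 + c2); split; first exact: LD.
    by rewrite scalerDl addrACA.
  - move=> k u [l1 [c1 [L1 ->]]]; exists (k *: l1), (k * c1); split; first exact: LZ.
    by rewrite scalerDr scalerA.
pose U := [set w | exists l (c : R), [/\ L l, 0 < c & w = l + c *: y]].
have [M [sM [MV dec]]] := complement sV.
have UV : U `<=` V by move=> u [l [c [Ll _ ->]]]; exists l, c.
have cU : convex_set U.
  move=> u1 u2 t [l1 [c1 [L1 c10 ->]]] [l2 [c2 [L2 c20 ->]]] t0 t1.
  exists (t *: l1 + (1 - t) *: l2), (t * c1 + (1 - t) * c2); split.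
  + by apply: LD; apply: LZ.
  + nra.
  + by rewrite comb2 !scalerA -scalerDl.
have oU : forall u v, U u -> V v -> exists2 l', 0 < l' &
      forall l, 0 <= l -> l <= l' -> U (u + l *: v).
  move=> u v [l [c [Ll c0 ->]]] [lv [cv [Lv ->]]].
  have a0' : 0 <= `|cv| by [].
  have acv : - `|cv| <= cv by rewrite lerNl ler_normr lexx orbT.
  exists (c / (1 + `|cv|)); first by rewrite divr_gt0 //; lra.
  move=> k k0 k1.
  have k1' : k * (1 + `|cv|) <= c by rewrite -ler_pdivlMr //; lra.
  have := mulr_ge0 k0 (_ : 0 <= cv + `|cv|).
  move=> /(_ ltac:(lra)) hk.
  exists (l + k *: lv), (c + k * cv); split.
  + by apply: LD => //; apply: LZ.
  + nra.
  + by rewrite [k *: (_ + _)]scalerDr comb1 scalerA -scalerDl.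
have [cB oB BU] := lift_open a0 sV sM MV dec UV cU oU.
set B := [set z | exists u m, [/\ U u, M m & z = a0 + u + m]] in cB oB BU.
exists B; split => //.
- exists y, 0; split.
  + by exists 0, 1; rewrite add0r scale1r.
  + by case: sM.
  + by rewrite addr0 /y addrC subrK.
- move=> a Ba Aa.
  have Va : V (a - a0) by exists (a - a0), 0; rewrite scale0r addr0; split => //; apply: La.
  have [l [c [Ll c0 Ea]]] := BU a Va Ba.
  apply: nLy; rewrite -/y.
  have -> : y = c^-1 *: ((a - a0) - l).
    by rewrite Ea addrC addKr scalerA mulVf ?scale1r // gt_eqF.
  by apply: (LZ c^-1); apply: (subspB sL) => //; apply: La.
Qed.

End Helpers4.

Unset Implicit Arguments.

Theorem proposition4p6 (R : realType) (X : lmodType R) (A : set X) :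
  convex_set A -> relatively_solid A ->
  cor (~` A) = int_c (~` A) /\
  alg_boundary A = vcl A `\` cor A.
Proof.
move=> cA [a0 ia0]; split.
- apply/seteqP; split=> x.
  + move=> cx.
    have nvx : ~ vcl A x by move=> /notcor_vcl.
    have [B [cB oB Bx BA]] :
        exists B, [/\ convex_set B, cor B = B, B x & B `<=` ~` A].
      have [Ly|nLy] := pselect (span_set (diff_set A) (x - a0)).
        exact: (case_in cA ia0 nvx Ly).
      exact: (case_out ia0 nLy).
    by exists B; split => //; apply: single_open.
  + move=> [U [[F [HF ->]] sub [B FB Bx]]].
    have [_ cB] := HF B FB.
    have BU : B `<=` ~` A by move=> z Bz; apply: sub; exists B.
    rewrite -cB in Bx; case: Bx => Bx H; split; first exact: BU.
    move=> x'; have [l' l'0 Hl] := H x'; exists l' => // l l0 l1.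
    exact: BU (Hl l l0 l1).
- apply/seteqP; split=> x [h1 h2].
  + by split => //; apply/notcor_vcl.
  + by split => //; apply/notcor_vcl.
Qed.
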